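(* Let $f:2^{[k]}\to\mathbb{R}$ be submodular and normalized, and let $\bar f=2^{-k}\sum_{S\subseteq[k]}f(S)$. Then $\bar f\ge f([k])/2$, and $\bar f=f([k])/2$ if and only if $f$ is modular.
   Context: $[k]=\{1,\dots,k\}$. $f$ is submodular if $f(S)+f(T)\ge f(S\cup T)+f(S\cap T)$ for all $S,T\subseteq[k]$, modular if this holds with equality for all $S,T$, normalized if $f(\emptyset)=0$. *)

(* Defs.v *)
From mathcomp Require Import all_boot all_order all_algebra.
Set Implicit Arguments. Unset Strict Implicit. Unset Printing Implicit Defensive.
Import Order.TTheory GRing.Theory Num.Theory.
Local Open Scope ring_scope.

Definition submodular (R : numDomainType) (k : nat) (f : {set 'I_k} -> R) : Prop :=
  forall S T : {set 'I_k}, f (S :|: T) + f (S :&: T) <= f S + f T.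

Definition modular (R : numDomainType) (k : nat) (f : {set 'I_k} -> R) : Prop :=
  forall S T : {set 'I_k}, f S + f T = f (S :|: T) + f (S :&: T).

Definition normalized (R : numDomainType) (k : nat) (f : {set 'I_k} -> R) : Prop :=
  f set0 = 0.

Definition favg (R : numFieldType) (k : nat) (f : {set 'I_k} -> R) : R :=
  (2%:R ^+ k)^-1 * \sum_(S : {set 'I_k}) f S.

(* Main.v *)
Require Import Defs.
From mathcomp Require Import all_boot all_order all_algebra.
From mathcomp Require Import ring lra.
Import Order.TTheory GRing.Theory Num.Theory.
Local Open Scope ring_scope.

Lemma sumg (R : realFieldType) (k : nat) (f : {set 'I_k} -> R) :
  \sum_(S : {set 'I_k}) (f S + f (~: S) - f setT)
  = 2%:R * \sum_(S : {set 'I_k}) f S - (2%:R ^+ k) * f setT.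
Proof.
rewrite sumrB big_split /= sumr_const -cardsT -powersetT card_powerset cardsT card_ord.
rewrite -(reindex_inj (@setC_inj _) (P := xpredT) (F := f)) /=.
by rewrite -[f _ *+ _]mulr_natl natrX; ring.
Qed.

Theorem lemma6 (R : realFieldType) (k : nat) (f : {set 'I_k} -> R) :
  submodular f -> normalized f ->
  f setT / 2%:R <= favg f /\ (favg f = f setT / 2%:R <-> modular f).
Proof.
move=> hsub hnorm.
have gge0 : forall S, 0 <= f S + f (~: S) - f setT.
  move=> S; have := hsub S (~: S); rewrite setUCr setICr hnorm; lra.
have hp : 0 < (2%:R ^+ k : R) by apply: exprn_gt0.
have E : favg f - f setT / 2%:R =
   (2%:R ^+ k)^-1 / 2%:R * \sum_(S : {set 'I_k}) (f S + f (~: S) - f setT).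
  rewrite sumg /favg; field; by rewrite gt_eqF.
have sge0 : 0 <= \sum_(S : {set 'I_k}) (f S + f (~: S) - f setT).
  by apply: sumr_ge0 => S _.
have cpos : 0 < (2%:R ^+ k : R)^-1 / 2%:R.
  by rewrite divr_gt0 // invr_gt0.
split.
  rewrite -subr_ge0 E; apply: mulr_ge0 => //; exact: ltW.
split.
- move=> heq.
  have : (2%:R ^+ k : R)^-1 / 2%:R * \sum_(S : {set 'I_k}) (f S + f (~: S) - f setT) = 0.
    by rewrite -E heq subrr.
  move/eqP; rewrite mulf_eq0 (gt_eqF cpos) /= => /eqP hs.
  have hall := psumr_eq0P (fun S _ => gge0 S) hs.
  have comp : forall S, f S + f (~: S) = f setT.
    by move=> S; have := hall S isT; lra.
  move=> S T.
  have h1 := hsub S T.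
  have h2 := hsub (~: S) (~: T).
  rewrite -setCI -setCU in h2.
  have c1 := comp S; have c2 := comp T; have c3 := comp (S :|: T);
  have c4 := comp (S :&: T).
  lra.
- move=> hmod.
  have z : forall S, f S + f (~: S) - f setT = 0.
    by move=> S; rewrite hmod setUCr setICr hnorm addr0 subrr.
  apply/eqP; rewrite -subr_eq0 E (eq_bigr (fun _ => 0)) ?big1 ?mulr0 //.
Qed.
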